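(* Let $(G,+,0,\ge)$ be a linearly ordered Abelian group and let $n$ be a natural number. Then every nonnegative sum-symmetric matrix $T\in G^{n\times n}$ is the sum of finitely many nonnegative circuit matrices in $G^{n\times n}$.
   Context: A linearly ordered Abelian group is an Abelian group $(G,+,0)$ with a linear (total) order $\ge$ on $G$ such that for all $a,b\in G$ one has $a\ge b$ if and only if $a-b\ge 0$. Write $[n]:=\{1,\dots,n\}$. A matrix $T=(t_{ij})_{i,j\in[n]}\in G^{n\times n}$ is nonnegative if all $t_{ij}\ge 0$. It is sum-symmetric if for each $i\in[n]$ the row sum $\sum_{j\in[n]}t_{ij}$ equals the column sum $\sum_{j\in[n]}t_{ji}$. A circuit matrix is a matrix $C^{J,\pi,c}=(c_{ij})_{i,j\in[n]}\in G^{n\times n}$ for which there exist $c\in G$, a set $J\subseteq[n]$ and a cyclic permutation $\pi$ of $J$ (a permutation of $J$ consisting of a single cycle through all elements of $J$) such that for all $i,j\in[n]$, $c_{ij}=c$ if $j=\pi(i)$ and $i\in J$, and $c_{ij}=0$ otherwise. The circuit matrix is nonnegative when $c\ge 0$. *)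

(* Defs.v *)
From mathcomp Require Import all_boot all_order all_algebra all_fingroup.
Set Implicit Arguments. Unset Strict Implicit. Unset Printing Implicit Defensive.
Import GRing.Theory.
Local Open Scope ring_scope.

Definition lin_ordered_abelian (G : zmodType) (ge : G -> G -> Prop) : Prop :=
  [/\ (forall a, ge a a),
      (forall a b, ge a b -> ge b a -> a = b),
      (forall a b c, ge a b -> ge b c -> ge a c),
      (forall a b, ge a b \/ ge b a) &
      (forall a b, ge a b <-> ge (a - b) 0)].

Definition nonneg_matrix (G : zmodType) (ge : G -> G -> Prop) (n : nat)
  (T : 'M[G]_n) : Prop := forall i j, ge (T i j) 0.

Definition sum_symmetric (G : zmodType) (n : nat) (T : 'M[G]_n) : Prop :=
  forall i, \sum_(j < n) T i j = \sum_(j < n) T j i.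

(* pi is a cyclic permutation of J: pi is a permutation of [n] fixing
   everything outside J (so it restricts to a permutation of J), and it
   consists of a single cycle through all elements of J. *)
Definition cyclic_perm_of (n : nat) (J : {set 'I_n}) (pi : {perm 'I_n}) : Prop :=
  perm_on J pi /\ (forall i, i \in J -> porbit pi i = J).

Definition circuit_mx (G : zmodType) (n : nat) (J : {set 'I_n})
  (pi : {perm 'I_n}) (c : G) : 'M[G]_n :=
  \matrix_(i, j) (if (i \in J) && (j == pi i) then c else 0).

Definition nonneg_circuit_matrix (G : zmodType) (ge : G -> G -> Prop) (n : nat)
  (C : 'M[G]_n) : Prop :=
  exists (c : G) (J : {set 'I_n}) (pi : {perm 'I_n}),
    [/\ cyclic_perm_of J pi, ge c 0 & C = circuit_mx J pi c].

(* Main.v *)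
Require Import Defs.
From mathcomp Require Import all_boot all_order all_algebra all_fingroup.
Set Implicit Arguments. Unset Strict Implicit. Unset Printing Implicit Defensive.
Import GRing.Theory.
Local Open Scope ring_scope.

Section Aux.
Variables (G : zmodType) (ge : G -> G -> Prop) (HG : lin_ordered_abelian ge).

Lemma ge_refl a : ge a a. Proof. by case: HG. Qed.
Lemma ge_anti a b : ge a b -> ge b a -> a = b. Proof. by case: HG => _ H _ _ _; apply: H. Qed.
Lemma ge_trans a b c : ge a b -> ge b c -> ge a c. Proof. by case: HG => _ _ H _ _; apply: H. Qed.
Lemma ge_tot a b : ge a b \/ ge b a. Proof. by case: HG => _ _ _ H _; apply: H. Qed.
Lemma ge_sh a b : ge a b <-> ge (a - b) 0. Proof. by case: HG => _ _ _ _ H; apply: H. Qed.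

Lemma geD a b c : ge a b -> ge (a + c) (b + c).
Proof.
move=> /ge_sh H; apply/ge_sh.
by have -> : a + c - (b + c) = a - b by rewrite opprD addrACA subrr addr0.
Qed.

Lemma ge_add0 a b : ge a 0 -> ge b 0 -> ge (a + b) 0.
Proof.
move=> Ha Hb; apply: (ge_trans _ Hb).
by have := geD b Ha; rewrite add0r.
Qed.

Lemma sum_ge0 (I : finType) (P : pred I) (F : I -> G) :
  (forall i, ge (F i) 0) -> ge (\sum_(i | P i) F i) 0.
Proof.
move=> H; apply: (big_ind (fun x => ge x 0)) => //; first exact: ge_refl.
exact: ge_add0.
Qed.

Lemma sum0_eq0 (I : finType) (F : I -> G) :
  (forall i, ge (F i) 0) -> \sum_i F i = 0 -> forall i, F i = 0.
Proof.
move=> H S i; apply: ge_anti; first exact: H.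
rewrite (bigD1 i) //= in S.
have R := @sum_ge0 _ (fun j => j != i) _ H.
move/eqP: S; rewrite addr_eq0 => /eqP ->.
by apply/ge_sh; rewrite sub0r opprK.
Qed.

Lemma seq_min (X : eqType) (g : X -> G) (s : seq X) x0 :
  x0 \in s -> exists2 z, z \in s & forall w, w \in s -> ge (g w) (g z).
Proof.
elim: s x0 => // a s IH x0 _.
case: s IH => [|b s] IH.
  by exists a; rewrite ?mem_head // => w; rewrite inE => /eqP ->; apply: ge_refl.
have [z zs Hz] := IH b (mem_head _ _).
case: (ge_tot (g a) (g z)) => H.
  exists z; first by rewrite inE zs orbT.
  by move=> w; rewrite inE => /orP[/eqP -> //|]; apply: Hz.
exists a; first exact: mem_head.
move=> w; rewrite inE => /orP[/eqP -> |/Hz Hw]; first exact: ge_refl.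
exact: ge_trans Hw H.
Qed.

Variable n : nat.
Implicit Types T : 'M[G]_n.

Lemma circuit_sumsym (J : {set 'I_n}) (pi : {perm 'I_n}) (c : G) :
  perm_on J pi -> sum_symmetric (circuit_mx J pi c).
Proof.
move=> HJ i.
under eq_bigr do rewrite mxE.
under [RHS]eq_bigr do rewrite mxE.
transitivity (if i \in J then c else 0).
  case: (boolP (i \in J)) => iJ /=; last by rewrite big1.
  rewrite (bigD1 (pi i)) //= eqxx big1 ?addr0 // => j /negbTE -> //.
have E1 : ((pi^-1)%g i \in J) = (i \in J) by rewrite -(perm_closed _ HJ) permKV.
rewrite (bigD1 (pi^-1 i)%g) //= permKV eqxx andbT E1.
rewrite big1 ?addr0 //.
move=> j Hj; case: ifP => // /andP[_ /eqP E].
by move: Hj; rewrite E permK eqxx.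
Qed.

Lemma sumsymB T1 T2 : sum_symmetric T1 -> sum_symmetric T2 ->
  sum_symmetric (T1 - T2).
Proof.
move=> H1 H2 i.
under eq_bigr do rewrite !mxE.
under [RHS]eq_bigr do rewrite !mxE.
by rewrite !sumrB H1 H2.
Qed.

Lemma row_nz T k i : nonneg_matrix ge T -> sum_symmetric T -> T k i != 0 ->
  exists j, T i j != 0.
Proof.
move=> Hn Hs Hk.
have [j Hj|H0] := pickP (fun j => T i j != 0); first by exists j.
have Hc : \sum_j T j i = 0.
  by rewrite -Hs big1 // => j _; move: (H0 j) => /= /negbFE/eqP.
by move: Hk; rewrite (sum0_eq0 (fun j => Hn j i) Hc k) eqxx.
Qed.

Lemma cycle_exists T i0 j0 : nonneg_matrix ge T -> sum_symmetric T ->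
  T i0 j0 != 0 ->
  exists J pi, cyclic_perm_of J pi /\ exists2 i1, i1 \in J &
    forall i, i \in J -> T i (pi i) != 0.
Proof.
move=> Hn Hs H0.
pose f i := if [pick j | T i j != 0] is Some j then j else i.
pose P i := [exists j, T i j != 0].
have fP i : P i -> T i (f i) != 0.
  rewrite /f; case: pickP => [//|H] /existsP[j Hj].
  by move: (H j) => /= /negbT; rewrite Hj.
have PS i : P i -> P (f i).
  move=> /fP Hi; have [j Hj] := row_nz Hn Hs Hi; by apply/existsP; exists j.
have Pit k : P (iter k f i0).
  elim: k => [|k IH] /=; last exact: PS.
  by apply/existsP; exists j0.
have := looping_order f i0 => /trajectP[m Hm E].
pose y := iter m f i0.
have cyc : fcycle f (fingraph.orbit f y).
  apply: (iffLR (@orbitPcycle _ f y 3 0)); exists (fingraph.order f i0 - m).-1.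
  rewrite prednK ?subn_gt0 // /y -iterD subnK ?E //; exact: ltnW.
set c := fingraph.orbit f y.
have Uc : uniq c by exact: orbit_uniq.
pose pi := perm (can_inj (prev_next Uc)).
have piE z : pi z = next c z by rewrite permE.
have pif z : z \in c -> pi z = f z by move=> zc; rewrite piE (nextE cyc).
have cP z : z \in c -> P z.
  move=> /trajectP[i _ ->].
  by rewrite /y -iterD; apply: Pit.
have itc i : iter i pi y \in c.
  elim: i => [|i IH] /=; first exact: in_orbit.
  by rewrite piE mem_next.
have K w : (w \in porbit pi y) = (w \in c).
  apply/idP/idP.
    by move=> /porbitP[i ->]; rewrite permX.
  move=> /trajectP[i _ ->].
  suff -> : iter i f y = iter i pi y by rewrite -permX mem_porbit.
  elim: i => [//|i IH] /=; by rewrite IH pif.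
exists [set z | z \in c], pi; split; last first.
  exists y; first by rewrite inE in_orbit.
  by move=> i; rewrite inE => ic; rewrite pif //; apply: fP; apply: cP.
split.
  apply/subsetP => z; rewrite !inE; apply: contraR => zc.
  by rewrite piE next_nth (negbTE zc).
move=> i; rewrite inE -K => iy.
have -> : porbit pi i = porbit pi y by apply/eqP; rewrite eq_porbit_mem.
by apply/setP => w; rewrite inE K.
Qed.

Definition cnt T := #|[set p : 'I_n * 'I_n | T p.1 p.2 != 0]|.

Lemma main k T : (cnt T < k)%N -> nonneg_matrix ge T -> sum_symmetric T ->
  exists s : seq 'M[G]_n,
    (forall C, C \in s -> nonneg_circuit_matrix ge C) /\
    T = \sum_(C <- s) C.
Proof.
elim: k T => [//|k IH] T Hk Hn Hs.
have [[i0 j0] /= Hnz | H0] := pickP (fun p : 'I_n * 'I_n => T p.1 p.2 != 0);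
  last first.
  exists [::]; split => //; rewrite big_nil; apply/matrixP => i j.
  by rewrite mxE; move: (H0 (i, j)) => /= /negbFE/eqP.
have [J [pi [[HJ Hcyc] [i2 i2J Hpos]]]] := cycle_exists Hn Hs Hnz.
have Hi2 : i2 \in enum J by rewrite mem_enum.
have [i1 i1J Hmin] := seq_min (fun i => T i (pi i)) Hi2.
rewrite mem_enum in i1J.
set c := T i1 (pi i1).
have Hmin' i : i \in J -> ge (T i (pi i)) c by move=> iJ; apply: Hmin; rewrite mem_enum.
have c0 : ge c 0 by apply: Hn.
set M := circuit_mx J pi c.
set T' := T - M.
have T'E i j : T' i j = T i j - (if (i \in J) && (j == pi i) then c else 0).
  by rewrite !mxE.
have Hn' : nonneg_matrix ge T'.
  move=> i j; rewrite T'E; case: ifP => [/andP[iJ /eqP ->]|_].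
    exact: (ge_sh _ _).1 (Hmin' i iJ).
  by rewrite subr0.
have Hs' : sum_symmetric T' by apply: sumsymB => //; apply: circuit_sumsym.
have Hlt : (cnt T' < cnt T)%N.
  apply: proper_card; apply/properP; split.
    apply/subsetP => [[i j]]; rewrite !inE /=; apply: contraNN => /eqP Tij.
    rewrite T'E Tij; case: ifP => [/andP[iJ /eqP Ej]|_]; last by rewrite subr0.
    have := Hmin' i iJ; rewrite -Ej Tij => Hc0.
    by rewrite (ge_anti c0 Hc0) subrr.
  exists (i1, pi i1); rewrite !inE /=; first exact: Hpos.
  by rewrite T'E i1J eqxx /= subrr eqxx.
have [s [Hs1 Hs2]] := IH T' (leq_trans Hlt Hk) Hn' Hs'.
exists (M :: s); split.
  move=> C; rewrite inE => /orP[/eqP ->|]; last exact: Hs1.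
  by exists c, J, pi; split.
by rewrite big_cons -Hs2 addrC subrK.
Qed.

End Aux.

Theorem theorem1 (G : zmodType) (ge : G -> G -> Prop)
  (HG : lin_ordered_abelian ge) (n : nat) (T : 'M[G]_n) :
  nonneg_matrix ge T -> sum_symmetric T ->
  exists s : seq 'M[G]_n,
    (forall C, C \in s -> nonneg_circuit_matrix ge C) /\
    T = \sum_(C <- s) C.
Proof. exact: (main HG (ltnSn _)). Qed.
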